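(* For any positive integers $r,t$ and positive real number $k'$ there exists a real number $\alpha=\alpha(r,t,k')>0$ such that the following holds. Let $\ell$ be a nonnegative integer or $\infty$, let $b$ be a positive integer, let $\epsilon'\ge0$ be real, let $G$ be a graph, $Y\subseteq V(G)$, and let $\mathcal C$ be a collection of pairwise disjoint connected subgraphs of $G-Y$, each with at most $b$ vertices, each $r$-adherent to $Y$ and each of radius at most $\ell$. Then at least one of the following holds: (1) there exists a graph $L$ with $|E(L)|>k'|V(L)|^{1+\epsilon'}$ such that $G$ contains a subgraph isomorphic to a $[2\ell+1]$-subdivision of $L$ whose branch vertices all lie in $Y$; (2) there exist $r$ distinct vertices $y_1,\dots,y_r\in Y$ and $t$ distinct members $C_1,\dots,C_t\in\mathcal C$ such that each $y_i$ has a neighbour in $V(C_j)$ for all $i\in[r]$, $j\in[t]$; (3) $|\mathcal C|\le\alpha|Y|^{1+\epsilon'(r-1)}$.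
   Context: Graphs are finite and simple. A subgraph $L$ of $G$ is $r$-adherent to $Y\subseteq V(G)$ if $V(L)\cap Y=\emptyset$ and at least $r$ vertices of $Y$ have a neighbour in $V(L)$. The radius of a connected graph is the least $k$ such that some vertex is at distance at most $k$ from every vertex. For a positive integer $m$, $[m]=\{1,\dots,m\}$, and $[\infty]$ denotes the set of all positive integers. For a set $S$ of nonnegative integers, an $S$-subdivision of a graph $L$ is obtained by subdividing each edge $e$ of $L$ exactly $s_e$ times for some $s_e\in S$; the vertices of $L$ are the branch vertices. *)

(* Defs.v *)
From HB Require Import structures.
From mathcomp Require Import all_boot all_order all_algebra.
From mathcomp Require Import reals exp.
Set Implicit Arguments. Unset Strict Implicit. Unset Printing Implicit Defensive.
Import Order.TTheory GRing.Theory Num.Theory.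

(* Graphs: a finite simple graph is a symmetric irreflexive relation e on a
   finType T.  [None] encodes infinity for nonnegative-integer-or-infinity
   parameters. *)

Definition in_bracket (m : option nat) (s : nat) : bool :=
  (0 < s) && (if m is Some k then s <= k else true).

Definition two_l_plus_one (l : option nat) : option nat :=
  omap (fun k => 2 * k + 1) l.

Definition is_subgraph (T : finType) (e : rel T) (V : {set T}) (E : rel T) :=
  (forall x y, E x y -> [/\ x \in V, y \in V & e x y]) /\
  (forall x y, E x y = E y x).

Definition sg_connected (T : finType) (V : {set T}) (E : rel T) :=
  V != set0 /\ (forall x y, x \in V -> y \in V -> connect E x y).

Definition radius_le (T : finType) (V : {set T}) (E : rel T) (l : option nat) :=
  if l is Some k then
    exists2 c, c \in V & forall x, x \in V ->
      exists p : seq T, [/\ path E c p, last c p = x & size p <= k]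
  else True.

Definition adherent (T : finType) (e : rel T) (V : {set T}) (r : nat) (Y : {set T}) :=
  [disjoint V & Y] /\ r <= #|[set y in Y | [exists x in V, e y x]]|.

Definition nedges (n : nat) (eL : rel 'I_n) : nat :=
  #|[set p : 'I_n * 'I_n | (p.1 < p.2)%N && eL p.1 p.2]|.

(* G contains a subgraph isomorphic to an S-subdivision of L (S = [m]),
   whose branch vertices all lie in Y: phi maps branch vertices injectively
   into Y; each edge uv (u < v) of L is replaced by the path
   phi u, P u v, phi v in G with #(P u v) in S internal vertices; all
   internal vertices are distinct from each other and from branch vertices. *)
Definition contains_subdivision (T : finType) (e : rel T) (Y : {set T})
    (m : option nat) (n : nat) (eL : rel 'I_n) : Prop :=
  exists phi : 'I_n -> T, injective phi /\ (forall v, phi v \in Y) /\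
  exists P : 'I_n -> 'I_n -> seq T,
    (forall u v : 'I_n, (u < v)%N -> eL u v ->
       [/\ in_bracket m (size (P u v)),
           path e (phi u) (rcons (P u v) (phi v)),
           uniq (P u v) &
           forall w, phi w \notin P u v]) /\
    (forall u v u' v' : 'I_n, (u < v)%N -> eL u v -> (u' < v')%N -> eL u' v' ->
       (u, v) != (u', v') -> forall x, x \in P u v -> x \notin P u' v').

(* Main.v *)
Require Import Defs.
From HB Require Import structures.
From mathcomp Require Import all_boot all_order all_algebra.
From mathcomp Require Import reals exp.
From mathcomp Require Import zify.
From mathcomp.algebra_tactics Require Import ring lra.
From Stdlib Require Import Classical.
Import Order.TTheory GRing.Theory Num.Theory.
Set Implicit Arguments. Unset Strict Implicit. Unset Printing Implicit Defensive.

Lemma last_rev_belast (T : Type) (c : T) p : last (last c p) (rev (belast c p)) = c.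
Proof. by case: p => //= y p; rewrite rev_cons last_rcons. Qed.

Lemma path_in (T : finType) (V : {set T}) (E : rel T) x q :
  (forall a b, E a b -> b \in V) -> path E x q -> {subset q <= V}.
Proof.
move=> HE; elim: q x => //= y q IH x /andP[Exy pq] z; rewrite inE => /orP[/eqP->|].
  exact: HE Exy.
exact: IH pq z.
Qed.

Lemma walk_in (T : finType) (V : {set T}) (E : rel T) (l : option nat) x1 x2 :
  (forall a b, E a b = E b a) -> sg_connected V E -> radius_le V E l ->
  x1 \in V -> x2 \in V ->
  exists q, [/\ path E x1 q, last x1 q = x2, uniq (x1 :: q) &
     (if l is Some k then (size q <= 2 * k)%N else true)].
Proof.
move=> Esym [_ Hc] Hr x1V x2V.
have [q0 [pq0 lq0 sq0]] : exists q0, [/\ path E x1 q0, last x1 q0 = x2 &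
     (if l is Some k then (size q0 <= 2 * k)%N else true)].
  case: l Hr => [k|] /= Hr.
    case: Hr => c cV Hc'.
    have [p1 [pp1 lp1 sp1]] := Hc' _ x1V.
    have [p2 [pp2 lp2 sp2]] := Hc' _ x2V.
    exists (rev (belast c p1) ++ p2); split.
    - rewrite cat_path; apply/andP; split.
        rewrite -lp1 rev_path.
        by rewrite (@eq_path _ _ E) // => a b /=; rewrite Esym.
      by rewrite -lp1 last_rev_belast.
    - by rewrite last_cat -lp1 last_rev_belast.
    - by rewrite size_cat size_rev size_belast; lia.
  have /connectP [p pp lp] := Hc _ _ x1V x2V.
  by exists p; split.
subst x2.
case/shortenP: pq0 => q pq uq sub.
exists q; split => //.
clear Hr; case: l sq0 => // k sk.
apply: leq_trans sk.
apply: uniq_leq_size; first by case/andP: uq.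
exact: sub.
Qed.

Section Greedy.
Variables (T : finType) (m' : nat) (A : 'I_m'.+1 -> {set T}).
Local Notation m := m'.+1.

Definition pk (L : {set T * T}) (i : 'I_m) : option (T * T) :=
  [pick p in setX (A i) (A i) | (p.1 != p.2) && (p \notin L)].
Definition addp (L : {set T * T}) (p : T * T) := L :|: [set p; (p.2, p.1)].
Definition step (L : {set T * T}) (i : 'I_m) := if pk L i is Some p then addp L p else L.
Fixpoint Ls j := if j is j'.+1 then (if (j' < m)%N then step (Ls j') (inord j') else Ls j')
                 else set0.

Lemma step_sub (L : {set T * T}) i : L \subset step L i.
Proof. by rewrite /step; case: (pk L i) => // p; apply: subsetUl. Qed.

Lemma Ls_mono j j' : (j <= j')%N -> Ls j \subset Ls j'.
Proof.
elim: j' => [|j' IH]; first by rewrite leqn0 => /eqP->.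
rewrite leq_eqVlt => /orP[/eqP->//|/IH H].
apply: subset_trans H _ => /=; case: ifP => // _; exact: step_sub.
Qed.

Lemma pk_some L i p : pk L i = Some p -> [/\ p.1 \in A i, p.2 \in A i, p.1 != p.2 & p \notin L].
Proof.
rewrite /pk; case: pickP => // q /andP[]; rewrite inE => /andP[h1 h2] /andP[h3 h4] [<-].
by split.
Qed.

Lemma pk_none L i x y : pk L i = None -> x \in A i -> y \in A i -> x != y -> (x, y) \in L.
Proof.
rewrite /pk; case: pickP => // H _ xA yA xy.
have := H (x, y); rewrite inE /= xA yA xy /=; by case: ((x,y) \in L).
Qed.

Lemma Ls_prop j x y : (x, y) \in Ls j ->
  [/\ (y, x) \in Ls j, x != y & exists i, x \in A i /\ y \in A i].
Proof.
elim: j => [|j IH] /=; first by rewrite inE.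
case: ifP => // _; rewrite /step; case E: (pk _ _) => [p|//].
rewrite /addp !inE => /orP[/IH [h1 h2 h3]|/orP[/eqP Hp|/eqP Hp]].
- by split => //; rewrite h1.
- have [a1 a2 a3 _] := pk_some E; move: Hp; case: p E a1 a2 a3 => a b /= _ a1 a2 a3 [-> ->].
  split; [|done|by exists (inord j)].
  by rewrite eqxx !orbT.
- have [a1 a2 a3 _] := pk_some E; move: Hp; case: p E a1 a2 a3 => a b /= _ a1 a2 a3 [-> ->].
  split; [|by rewrite eq_sym|by exists (inord j)].
  by rewrite eqxx !orbT.
Qed.

Lemma Ls_new j x y : (j < m)%N -> (x, y) \notin Ls j -> (x, y) \in Ls j.+1 ->
  exists p, pk (Ls j) (inord j) = Some p /\ ((x, y) = p \/ (x, y) = (p.2, p.1)).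
Proof.
move=> jm n1 /=; rewrite jm /step; case E: (pk _ _) => [p|]; last by rewrite (negbTE n1).
rewrite /addp !inE (negbTE n1) /= => /orP[/eqP->|/eqP->]; by exists p; split; auto.
Qed.

Definition idx x y := find (fun j => (x, y) \in Ls j.+1) (iota 0 m).

Lemma idx_spec x y : (x, y) \in Ls m ->
  [/\ (idx x y < m)%N, (x, y) \notin Ls (idx x y) & (x, y) \in Ls (idx x y).+1].
Proof.
move=> H.
have hh : has (fun j => (x, y) \in Ls j.+1) (iota 0 m).
  apply/hasP; exists m' => //; rewrite mem_iota; lia.
have lt : (idx x y < m)%N by rewrite -[X in (_ < X)%N](size_iota 0 m) -has_find.
split => //.
- case E: (idx x y) => [|k]; first by rewrite /= inE.
  have := @before_find _ 0 (fun j => (x, y) \in Ls j.+1) (iota 0 m) k.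
  rewrite -/(idx x y) E ltnSn nth_iota /=; last by rewrite E in lt; lia.
  by move=> ->.
- have := nth_find 0 hh; rewrite -/(idx x y) nth_iota //.
Qed.

Lemma idx_pick x y : (x, y) \in Ls m ->
  exists i : 'I_m, exists p, [/\ val i = idx x y, pk (Ls i) i = Some p &
     ((x, y) = p \/ (x, y) = (p.2, p.1))].
Proof.
move=> H; have [lt n1 i1] := idx_spec H.
have [p [E1 E2]] := Ls_new lt n1 i1.
exists (inord (idx x y)), p; rewrite inordK //; split => //; exact: inordK.
Qed.

Lemma idx_A x y : (x, y) \in Ls m ->
  exists i : 'I_m, [/\ val i = idx x y, x \in A i & y \in A i].
Proof.
move=> /idx_pick [i [p [h1 h2 h3]]]; exists i; have [a1 a2 _ _] := pk_some h2.
case: p h2 h3 a1 a2 => a b _ /= [[E1 E2]|[E1 E2]] a1 a2; split => //; by rewrite ?E1 ?E2.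
Qed.

Lemma idx_inj x y x' y' : (x, y) \in Ls m -> (x', y') \in Ls m -> idx x y = idx x' y' ->
  (x = x' /\ y = y') \/ (x = y' /\ y = x').
Proof.
move=> /idx_pick [i [p [h1 h2 h3]]] /idx_pick [i' [p' [h1' h2' h3']]] E.
have ii : i = i' by apply: val_inj; rewrite h1 h1'.
subst i'; rewrite h2 in h2'; case: h2' => ?; subst p'.
case: p h2 h3 h3' => a b /= _; do 2 (case=> [[-> ->]|[-> ->]]); auto.
Qed.

Definition Used := [set i : 'I_m | pk (Ls i) i != None].

Lemma card_Used (z0 : T) : (#|Used| <= #|Ls m|)%N.
Proof.
pose f i := if pk (Ls (val i)) i is Some p then p else (z0, z0).
have fin : {in Used, forall i, f i \in Ls m}.
  move=> i; rewrite inE /f; case E: (pk _ _) => [p|//] _.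
  have [_ _ _ _] := pk_some E.
  apply: (subsetP (Ls_mono (ltn_ord i))) => /=.
  rewrite ltn_ord inord_val /step E /addp !inE eqxx ?orbT //.
have finj : {in Used &, injective f}.
  have key : forall i j : 'I_m, (i < j)%N -> i \in Used -> j \in Used -> f i != f j.
    move=> i j ij; rewrite !inE /f.
    case E: (pk _ i) => [p|//]; case E': (pk _ j) => [p'|//] _ _.
    have [_ _ _ n'] := pk_some E'.
    apply/eqP => pp; subst p'; move: n'; apply/negP/negPn.
    apply: (subsetP (Ls_mono ij)) => /=.
    rewrite ltn_ord inord_val /step E /addp !inE eqxx ?orbT //.
  move=> i j iU jU fij; case: (ltngtP i j) => [ij|ji|/val_inj //].
  - by have := key _ _ ij iU jU; rewrite fij eqxx.
  - by have := key _ _ ji jU iU; rewrite fij eqxx.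
rewrite -(card_in_imset finj); apply: subset_leq_card.
by apply/subsetP => _ /imsetP [i iU ->]; apply: fin.
Qed.

Lemma unused_clique (i : 'I_m) x y : i \notin Used -> x \in A i -> y \in A i -> x != y ->
  (x, y) \in Ls m.
Proof.
rewrite inE negbK => /eqP E xA yA xy.
apply: (subsetP (Ls_mono (ltnW (ltn_ord i)))).
exact: pk_none E xA yA xy.
Qed.

End Greedy.

Lemma ffact_le_exp n k : (n ^_ k <= n ^ k)%N.
Proof.
elim: k n => [|k IH] n //; rewrite ffactnS expnS.
apply: leq_mul => //; apply: leq_trans (IH _) _.
case: k {IH} => // k; rewrite leq_exp2r //; exact: leq_pred.
Qed.

Lemma bin_le_exp n k : ('C(n, k) <= n ^ k)%N.
Proof.
apply: leq_trans (ffact_le_exp n k); rewrite -bin_ffact.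
by apply: leq_pmulr; apply: fact_gt0.
Qed.

Section Count.
Variable T : finType.
Implicit Types (L : {set T * T}) (Z : {set T}).

Definition deg L (Y0 : {set T}) y := #|[set z in Y0 | (y, z) \in L]|.
Definition PY L (Y0 : {set T}) := [set p in L | (p.1 \in Y0) && (p.2 \in Y0)].

Lemma deg_sum L (Y0 : {set T}) : #|PY L Y0| = (\sum_(y in Y0) deg L Y0 y)%N.
Proof.
rewrite -sum1_card (partition_big (fun p : T * T => p.1) (mem Y0)); last first.
  by move=> p; rewrite inE => /andP[_ /andP[]].
apply: eq_bigr => y yY.
transitivity #|[set p in PY L Y0 | p.1 == y]|.
  by rewrite -sum1_card; apply: eq_bigl => p; rewrite !inE.
rewrite /deg -[RHS](@card_imset _ _ (fun z => (y, z))); last by move=> a b [].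
apply: eq_card => p; rewrite !inE; apply/idP/idP.
  case: p => a b /= /andP[/andP[abL /andP[aY bY]] /eqP ay]; subst a.
  by apply/imsetP; exists b => //; rewrite inE bY abL.
case/imsetP => z; rewrite inE => /andP[zY yzL] ->; rewrite /= yzL zY eqxx !andbT.
exact: yY.
Qed.

Lemma min_deg L (Y0 : {set T}) : Y0 != set0 ->
  exists2 y, y \in Y0 & (#|Y0| * deg L Y0 y <= #|PY L Y0|)%N.
Proof.
case/set0Pn => y0 y0Y.
case: (@arg_minnP _ y0 (mem Y0) (deg L Y0) y0Y) => y yY ymin.
exists y => //; rewrite deg_sum -sum_nat_const.
by apply: leq_sum => i iY; apply: ymin.
Qed.

Definition clq L r (Y0 : {set T}) := [set S : {set T} | (S \subset Y0) && (#|S| == r) &&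
  [forall x in S, forall y in S, (x != y) ==> ((x, y) \in L)]].

Lemma clq_step L r1 (Y0 : {set T}) y : y \in Y0 ->
  (#|clq L r1.+1 Y0| <= #|clq L r1.+1 (Y0 :\ y)| + (deg L Y0 y) ^ r1)%N.
Proof.
move=> yY.
set N := [set z in Y0 | (y, z) \in L].
set C1 := [set S in clq L r1.+1 Y0 | y \in S].
have sub : clq L r1.+1 Y0 \subset clq L r1.+1 (Y0 :\ y) :|: C1.
  apply/subsetP => S; rewrite !inE => /andP[/andP[SY Sr] Scl].
  case yS: (y \in S); first by rewrite Sr Scl SY orbT.
  rewrite Sr Scl !andbT andbF orbF; apply/subsetP => z zS.
  rewrite !inE (subsetP SY _ zS) andbT; apply/eqP => zy; subst z.
  by rewrite zS in yS.
apply: leq_trans (subset_leq_card sub) _.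
apply: leq_trans (leq_card_setU _ _) _; rewrite leq_add2l.
apply: leq_trans (bin_le_exp _ _); rewrite /deg -/N -cards_draws.
have inj : {in C1 &, injective (fun S => S :\ y)}.
  move=> S S'; rewrite !inE => /andP[_ yS] /andP[_ yS'] E.
  by rewrite -(setD1K yS) -(setD1K yS') E.
apply: leq_trans (_ : #|[set S :\ y | S in C1]| <= _)%N.
  by rewrite (card_in_imset inj).
apply: subset_leq_card.
apply/subsetP => X /imsetP [S SC1 XE]; subst X.
move: SC1; rewrite !inE => /andP[/andP[/andP[SY /eqP Sr] Scl] yS].
apply/andP; split.
  apply/subsetP => z; rewrite !inE => /andP[zy zS].
  rewrite (subsetP SY _ zS) /=.
  by move/forallP: Scl => /(_ y) /implyP /(_ yS) /forallP /(_ z) /implyP /(_ zS) /implyP; apply; rewrite eq_sym.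
by move: Sr; rewrite (cardsD1 y) yS add1n => -[->].
Qed.

Local Open Scope ring_scope.
Lemma clq_bound (R : realFieldType) L r1 (D : R) (Y : {set T}) : 0 <= D ->
  (forall Y0 : {set T}, Y0 \subset Y -> Y0 != set0 -> exists2 y, y \in Y0 & (deg L Y0 y)%:R <= D) ->
  (#|clq L r1.+1 Y|)%:R <= (#|Y|)%:R * D ^+ r1.
Proof.
move=> D0 HD.
suff H : forall n (Y0 : {set T}), #|Y0| = n :> nat -> Y0 \subset Y -> (#|clq L r1.+1 Y0|)%:R <= n%:R * D ^+ r1.
  exact: H.
elim=> [|n IH] Y0 cY sY.
  have -> : clq L r1.+1 Y0 = set0.
    apply/setP => S; rewrite !inE; apply/negP => /andP[/andP[SY /eqP Sr] _].
    move/eqP: cY; rewrite cards_eq0 => /eqP Y00; subst Y0.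
    by move: SY; rewrite subset0 => /eqP S0; subst S; rewrite cards0 in Sr.
  by rewrite cards0 mul0r.
have Y0n : Y0 != set0 by rewrite -cards_eq0 cY.
have [y yY dy] := HD _ sY Y0n.
have c1 : #|Y0 :\ y| = n :> nat by move: cY; rewrite (cardsD1 y) yY add1n => -[].
have s1 : Y0 :\ y \subset Y by apply: subset_trans sY; apply: subsetDl.
apply: le_trans (_ : (#|clq L r1.+1 (Y0 :\ y)|)%:R + (deg L Y0 y)%:R ^+ r1 <= _).
  by rewrite -natrX -natrD ler_nat; apply: clq_step.
rewrite [n.+1%:R]mulrSr mulrDl mul1r; apply: lerD; first exact: IH.
by apply: lerXn2r => //; rewrite nnegrE.
Qed.

End Count.

Lemma two_nedges n (eL : rel 'I_n) : symmetric eL -> irreflexive eL ->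
  #|[set p : 'I_n * 'I_n | eL p.1 p.2]| = (2 * nedges eL)%N.
Proof.
move=> Hs Hi.
set S := [set p : 'I_n * 'I_n | eL p.1 p.2].
set S1 := [set p : 'I_n * 'I_n | (p.1 < p.2)%N && eL p.1 p.2].
rewrite -(cardsID [set p : 'I_n * 'I_n | (p.1 < p.2)%N] S).
have E1 : S :&: [set p : 'I_n * 'I_n | (p.1 < p.2)%N] = S1.
  by apply/setP => p; rewrite !inE andbC.
have E2 : S :\: [set p : 'I_n * 'I_n | (p.1 < p.2)%N] = (fun p => (p.2, p.1)) @: S1.
  apply/setP => [[a b]]; rewrite !inE /=; apply/idP/imsetP.
    move=> /andP[nab eab]; exists (b, a) => //; rewrite inE /= Hs eab andbT.
    rewrite ltn_neqAle leqNgt nab andbT; apply/eqP => ba.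
    by have := Hi a; rewrite -{2}(val_inj ba) eab.
  case=> [[c d]]; rewrite inE /= => /andP[cd ecd] [-> ->].
  by rewrite -leqNgt ltnW //= Hs.
rewrite E1 E2 card_imset; first by rewrite /nedges -/S1 mul2n addnn.
by move=> [a b] [c d] [-> ->].
Qed.

Lemma PY_le (T : finType) (L : {set T * T}) (Y0 : {set T}) :
  (#|[set p in L | (p.1 \in Y0) && (p.2 \in Y0)]| <=
   #|[set p : 'I_#|Y0| * 'I_#|Y0| | (enum_val p.1, enum_val p.2) \in L]|)%N.
Proof.
set g := fun p : 'I_#|Y0| * 'I_#|Y0| => (enum_val p.1, enum_val p.2).
apply: leq_trans (leq_imset_card g _); apply: subset_leq_card.
apply/subsetP => [[a b]]; rewrite !inE /= => /andP[abL /andP[aY bY]].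
apply/imsetP; exists (enum_rank_in aY a, enum_rank_in aY b).
  by rewrite inE /= !(enum_rankK_in aY).
by rewrite /g /= !(enum_rankK_in aY).
Qed.

Lemma realize (T : finType) (e : rel T) (Y Y0 : {set T}) (L : {set T * T})
    (M : option nat) (Q : T -> T -> seq T) (W : T -> T -> {set T}) :
  Y0 \subset Y ->
  (forall x y, (x, y) \in L -> [/\ in_bracket M (size (Q x y)),
       path e x (rcons (Q x y) y), uniq (Q x y) & {subset Q x y <= W x y}]) ->
  (forall x y, (x, y) \in L -> [disjoint W x y & Y]) ->
  (forall x y x' y', (x, y) \in L -> (x', y') \in L ->
       ~ ((x = x' /\ y = y') \/ (x = y' /\ y = x')) -> [disjoint W x y & W x' y']) ->
  contains_subdivision e Y M (fun u v : 'I_#|Y0| => (enum_val u, enum_val v) \in L).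
Proof.
move=> sY HQ HWY HWW.
exists (fun u => enum_val u); split; first exact: enum_val_inj.
split; first by move=> v; apply: (subsetP sY); apply: enum_valP.
exists (fun u v => Q (enum_val u) (enum_val v)); split.
  move=> u v uv euv; have [h1 h2 h3 h4] := HQ _ _ euv; split => // w.
  apply/negP => /h4 wW.
  have sY' := subsetP sY _ (enum_valP w).
  by rewrite (disjointFr (HWY _ _ euv) wW) in sY' ; done.
move=> u v u' v' uv euv uv' euv' neq x xP.
have nn : ~ ((enum_val u = enum_val u' /\ enum_val v = enum_val v') \/
             (enum_val u = enum_val v' /\ enum_val v = enum_val u')).
  case=> [[/enum_val_inj E1 /enum_val_inj E2]|[/enum_val_inj E1 /enum_val_inj E2]].
    by move: neq; rewrite E1 E2 eqxx.
  by subst; lia.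
have [_ _ _ h4] := HQ _ _ euv; have [_ _ _ h4'] := HQ _ _ euv'.
apply/negP => /h4' xW'.
by rewrite (disjointFr (HWW _ _ _ _ euv euv' nn) (h4 _ xP)) in xW'.
Qed.
Unset Implicit Arguments.
Local Open Scope ring_scope.

Lemma or3_intro (A B C : Prop) : (~ A -> ~ B -> C) -> A \/ B \/ C.
Proof. by move=> H; case: (classic A) => [|nA]; [left|right; case: (classic B) => [|nB]; [left|right; apply: H]]. Qed.

Lemma ex_subset_card (T : finType) (S : {set T}) k : (k <= #|S|)%N ->
  exists B : {set T}, (B \subset S) && (#|B| == k).
Proof.
move=> kS.
have : (0 < #|[set B : {set T} | B \subset S & #|B| == k]|)%N by rewrite cards_draws bin_gt0.
by case/card_gt0P => B; rewrite inE => H; exists B.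
Qed.

Theorem mainTheorem8 (R : realType) (r t : nat) (k' : R) :
  (0 < r)%N -> (0 < t)%N -> 0 < k' ->
  exists2 alpha : R, 0 < alpha &
  forall (l : option nat) (b : nat) (eps : R) (T : finType) (e : rel T)
         (Y : {set T}) (m : nat) (CV : 'I_m -> {set T}) (CE : 'I_m -> rel T),
    (0 < b)%N -> 0 <= eps ->
    symmetric e -> irreflexive e ->
    (forall i, is_subgraph e (CV i) (CE i)) ->
    (forall i, [disjoint CV i & Y]) ->
    (forall i j, i != j -> [disjoint CV i & CV j]) ->
    (forall i, sg_connected (CV i) (CE i)) ->
    (forall i, (#|CV i| <= b)%N) ->
    (forall i, adherent e (CV i) r Y) ->
    (forall i, radius_le (CV i) (CE i) l) ->
    (exists (n : nat) (eL : rel 'I_n),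
        [/\ symmetric eL, irreflexive eL,
            k' * powR (n%:R) (1 + eps) < (nedges eL)%:R &
            contains_subdivision e Y (two_l_plus_one l) eL])
    \/ (exists (S : {set T}) (J : {set 'I_m}),
        [/\ S \subset Y, #|S| = r, #|J| = t &
            forall y j, y \in S -> j \in J -> [exists x in CV j, e y x]])
    \/ m%:R <= alpha * powR (#|Y|%:R) (1 + eps * (r%:R - 1)).
Proof.
move=> r0 t0 k0.
case: r r0 => [//|r1] _.
pose alpha := 2 * k' + (t - 1)%:R * (2 * k') ^+ r1.
have hal : 0 <= (t - 1)%:R * (2 * k') ^+ r1.
  by apply: mulr_ge0 => //; apply: exprn_ge0; lra.
exists alpha; first by rewrite /alpha; lra.
move=> l b eps T e Y m CV CE b0 eps0 esym eirr Hsub Hdisj HCC Hconn Hsize Hadh Hrad.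
apply: or3_intro => N1 N2.
have rr : r1.+1%:R - 1 = r1%:R :> R by rewrite mulrSr addrK.
rewrite rr.
have pge0 : forall a x : R, 0 <= powR a x by move=> *; apply: powR_ge0.
case: m CV CE Hdisj HCC Hsize Hadh Hrad N2 Hsub Hconn => [|m'] CV CE Hdisj HCC Hsize Hadh Hrad N2 Hsub Hconn.
  by apply: mulr_ge0; [rewrite /alpha; lra | apply: powR_ge0].
pose N := fun i => [set y in Y | [exists x in CV i, e y x]].
have NY : forall i, N i \subset Y.
  by move=> i; apply/subsetP => y; rewrite inE => /andP[].
have exA : forall i, exists B : {set T}, (B \subset N i) && (#|B| == r1.+1).
  by move=> i; apply: ex_subset_card; case: (Hadh i).
pose A := fun i => xchoose (exA i).
have HA : forall i, A i \subset N i /\ #|A i| = r1.+1.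
  by move=> i; have /andP[h1 /eqP h2] := xchooseP (exA i); split.
have exP : forall (i : 'I_m'.+1) x y, exists P : seq T, ((x \in N i) && (y \in N i)) ==>
    [&& in_bracket (two_l_plus_one l) (size P), path e x (rcons P y), uniq P &
        all (mem (CV i)) P].
  move=> i x y; case: (boolP ((x \in N i) && (y \in N i))); last by exists [::].
  rewrite /N !inE.
  move=> /andP[/andP[xY /existsP[x1 /andP[x1C ex1]]] /andP[yY /existsP[x2 /andP[x2C ey2]]]].
  have [Ei Esym'] := Hsub i.
  have [q [pq lq uq sq]] := walk_in Esym' (Hconn i) (Hrad i) x1C x2C.
  exists (x1 :: q); apply/implyP => _; apply/and4P; split => //.
  - move: sq; rewrite /in_bracket /=; destruct l as [k|] => //= sq; lia.
  - rewrite /= ex1 /= rcons_path lq (esym x2 y) ey2 andbT.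
    by apply: sub_path pq => a c /Ei [].
  - rewrite /= x1C /=; apply/allP => z zq.
    by apply: (path_in (V := CV i) _ pq) => // a c /Ei [].
pose Qc := fun i x y => xchoose (exP i x y).
pose L := Ls A m'.+1.
pose Q := fun x y => Qc (inord (idx A x y)) x y.
pose W := fun x y => CV (inord (idx A x y)).
have hQ : forall x y, (x, y) \in L -> [/\ in_bracket (two_l_plus_one l) (size (Q x y)),
       path e x (rcons (Q x y) y), uniq (Q x y) & {subset Q x y <= W x y}].
  move=> x y H; have [i [vi xA yA]] := idx_A H.
  have ii : inord (idx A x y) = i.
    by rewrite -vi inord_val.
  rewrite /Q /W ii.
  have xyN : (x \in N i) && (y \in N i) by rewrite (subsetP (HA i).1 _ xA) (subsetP (HA i).1 _ yA).
  have /implyP/(_ xyN)/and4P[g1 g2 g3 /allP g4] := xchooseP (exP i x y).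
  by split.
have hWY : forall x y, (x, y) \in L -> [disjoint W x y & Y] by move=> *; apply: Hdisj.
have hWW : forall x y x' y', (x, y) \in L -> (x', y') \in L ->
       ~ ((x = x' /\ y = y') \/ (x = y' /\ y = x')) -> [disjoint W x y & W x' y'].
  move=> x y x' y' H H' nE; apply: HCC; apply/negP => /eqP E.
  apply: nE; apply: (idx_inj H H').
  have [i1 _ _] := idx_spec H; have [i2 _ _] := idx_spec H'.
  by move: (congr1 (@nat_of_ord _) E); rewrite !inordK.
have hLY : forall x y, (x, y) \in L -> (x \in Y) && (y \in Y).
  move=> x y /Ls_prop [_ _ [i [xA yA]]].
  by rewrite (subsetP (NY i) _ (subsetP (HA i).1 _ xA)) (subsetP (NY i) _ (subsetP (HA i).1 _ yA)).
have sparse : forall Y0 : {set T}, Y0 \subset Y ->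
    (#|PY L Y0|)%:R <= 2 * k' * powR (#|Y0|%:R) (1 + eps).
  move=> Y0 sY0.
  pose eL := fun u v : 'I_#|Y0| => (enum_val u, enum_val v) \in L.
  have syme : symmetric eL by move=> u v; rewrite /eL; apply/idP/idP => /Ls_prop [].
  have irre : irreflexive eL by move=> u; rewrite /eL; apply/negP => /Ls_prop [_ /eqP].
  have cs : contains_subdivision e Y (two_l_plus_one l) eL := realize sY0 hQ hWY hWW.
  have nle : (nedges eL)%:R <= k' * powR (#|Y0|%:R) (1 + eps).
    by rewrite leNgt; apply/negP => H; apply: N1; exists #|Y0|, eL; split.
  apply: le_trans (_ : ((2 * nedges eL)%N)%:R <= _).
    by rewrite ler_nat -two_nedges //; exact: PY_le.
  by rewrite natrM; lra.
pose n := #|Y|.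
pose D := 2 * k' * powR (n%:R) eps.
have D0 : 0 <= D by apply: mulr_ge0; [lra | exact: powR_ge0].
have HD : forall Y0 : {set T}, Y0 \subset Y -> Y0 != set0 ->
    exists2 y, y \in Y0 & (deg L Y0 y)%:R <= D.
  move=> Y0 sY0 Y0n; have [y yY hy] := min_deg L Y0n; exists y => //.
  have n0 : (0 < #|Y0|)%N by rewrite card_gt0.
  have h2 : ((#|Y0| * deg L Y0 y)%N)%:R <= 2 * k' * powR #|Y0|%:R (1 + eps).
    by apply: le_trans (sparse _ sY0); rewrite ler_nat.
  have pw : powR (#|Y0|%:R) (1 + eps) = #|Y0|%:R * powR (#|Y0|%:R) eps.
    rewrite powRD ?powRr1 //; apply/implyP => _; by rewrite pnatr_eq0 -lt0n.
  have mono : powR #|Y0|%:R eps <= powR n%:R eps.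
    by apply: ge0_ler_powR => //; rewrite ?nnegrE ?ler0n // ler_nat subset_leq_card.
  have e1 : 2 * k' * (#|Y0|%:R * powR (#|Y0|%:R) eps) = #|Y0|%:R * (2 * k' * powR (#|Y0|%:R) eps).
    by ring.
  move: h2; rewrite natrM pw e1 ler_pM2l ?ltr0n // => h3.
  apply: le_trans h3 _; rewrite /D ler_wpM2l //; lra.
have Hcl := @clq_bound T R L r1 D Y D0 HD.
have [z0 z0Y] : exists z0, z0 \in Y.
  have : (0 < #|A ord0|)%N by rewrite (HA ord0).2.
  case/card_gt0P => y yA; exists y.
  exact: (subsetP (NY ord0) _ (subsetP (HA ord0).1 _ yA)).
have npos : (0 < n)%N by apply/card_gt0P; exists z0.
have hU : (#|Used A|)%:R <= 2 * k' * powR n%:R (1 + eps * r1%:R).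
  have c1 : (#|Used A| <= #|PY L Y|)%N.
    apply: leq_trans (card_Used A z0) _; apply: subset_leq_card.
    by apply/subsetP => -[x y] H; rewrite inE H /=; exact: hLY H.
  have [r10|r1pos] := posnP r1.
    have c0 : #|PY L Y| = 0%N.
      apply/eqP; rewrite cards_eq0; apply/eqP/setP => -[x y]; rewrite !inE.
      apply/negP => /andP[/Ls_prop [_ nxy [i [xA yA]]] _].
      have := (HA i).2; rewrite r10 => /eqP/cards1P [z Az].
      by move: xA yA nxy; rewrite Az !inE => /eqP -> /eqP ->; rewrite eqxx.
    move: c1; rewrite c0 leqn0 => /eqP ->.
    by apply: mulr_ge0; [lra | exact: powR_ge0].
  apply: le_trans (_ : (#|PY L Y|)%:R <= _); first by rewrite ler_nat.
  apply: le_trans (sparse _ (subxx Y)) _.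
  apply: ler_wpM2l; first lra.
  apply: ler_powR; first by rewrite ler1n.
  have : 1 <= r1%:R :> R by rewrite ler1n.
  nra.
have hUn : (#|~: Used A| <= #|clq L r1.+1 Y| * (t - 1))%N.
  have inC : forall i, i \in ~: Used A -> A i \in clq L r1.+1 Y.
    move=> i; rewrite inE => iU; rewrite inE.
    rewrite (subset_trans (HA i).1 (NY i)) (HA i).2 eqxx /=.
    apply/forallP => x; apply/implyP => xA; apply/forallP => y; apply/implyP => yA.
    by apply/implyP => xy; exact: unused_clique iU xA yA xy.
  rewrite -sum1_card (partition_big A (mem (clq L r1.+1 Y))) //=.
  rewrite -sum_nat_const; apply: leq_sum => S SC.
  rewrite sum1dep_card; set F := [set i | _].
  rewrite leqNgt; apply/negP => hF.
  have [J /andP[JF /eqP Jt]] := @ex_subset_card _ F t ltac:(lia).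
  apply: N2; exists S, J.
  move: SC; rewrite inE => /andP[/andP[SY /eqP Sr] _].
  split => // y j yS jJ.
  have := subsetP JF _ jJ; rewrite inE => /andP[_ /eqP AjS].
  have := subsetP (HA j).1 y; rewrite AjS => /(_ yS).
  by rewrite /N inE => /andP[_ ->].
have cm : m'.+1 = (#|Used A| + #|~: Used A|)%N by rewrite cardsC card_ord.
rewrite -/n cm natrD.
set P := powR n%:R (1 + eps * r1%:R).
have hP : n%:R * D ^+ r1 = (2 * k') ^+ r1 * P.
  have q1 : powR n%:R eps ^+ r1 = powR n%:R (eps * r1%:R).
    by rewrite powRrM powR_mulrn // powR_ge0.
  have q2 : n%:R * powR n%:R (eps * r1%:R) = P.
    rewrite /P powRD ?powRr1 //; apply/implyP => _; by rewrite pnatr_eq0 -lt0n.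
  by rewrite /D exprMn q1 -q2; ring.
have h3 : (#|~: Used A|)%:R <= (t - 1)%:R * ((2 * k') ^+ r1 * P).
  apply: le_trans (_ : ((#|clq L r1.+1 Y| * (t - 1))%N)%:R <= _); first by rewrite ler_nat.
  rewrite natrM mulrC -hP; apply: ler_wpM2l => //.
have PP : 0 <= P by exact: powR_ge0.
rewrite /alpha mulrDl; apply: lerD; first exact: hU.
by rewrite -mulrA.
Qed.
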